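(* Let $d\ge1$ and let $\Phi$ be a Young function with $p_\Phi<\infty$. Let $r_0=\lim_{t\to0^+}r_\Phi(t)$ and $r_\infty=\lim_{t\to\infty}r_\Phi(t)$ (which exist), and suppose $r_0,r_\infty>1$. Then $$L^p(\mathbb R^d)\cap L^q(\mathbb R^d)\subseteq L^\Phi(\mathbb R^d)\subseteq L^p(\mathbb R^d)+L^q(\mathbb R^d)$$ for every $p>\max\{r_0,r_\infty\}$ and every $1<q<\min\{r_0,r_\infty\}$.
   Context: A Young function is a convex function $\Phi:[0,\infty)\to[0,\infty)$ with $\Phi(0)=0$, $\Phi(t)>0$ for $t>0$, and $\lim_{t\to\infty}\Phi(t)=\infty$. $\Phi'$ denotes the right derivative of $\Phi$. The Lebesgue exponents of $\Phi$ are $p_\Phi=\sup_{t>0}\frac{t\Phi'(t)}{\Phi(t)}$ and $q_\Phi=\inf_{t>0}\frac{t\Phi'(t)}{\Phi(t)}$. For a Young function $\Phi$, $r_\Phi(t)=\frac{\ln(\Phi(t)/\Phi(1))}{\ln t}$ for $t>0$, $t\ne1$. For a measurable $f$ on $\mathbb R^d$, $\rho_\Phi(f)=\int_{\mathbb R^d}\Phi(|f(x)|)\,dx$, the Luxemburg norm is $\|f\|_{L^\Phi}=\inf\{\lambda>0:\rho_\Phi(f/\lambda)\le1\}$, and the Orlicz space $L^\Phi(\mathbb R^d)$ consists of (classes of) measurable $f$ with $\|f\|_{L^\Phi}<\infty$. $L^p+L^q$ is the set of sums $g+h$ with $g\in L^p$, $h\in L^q$. *)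

(* Defs.v *)
From HB Require Import structures.
From mathcomp Require Import all_boot all_order all_algebra.
From mathcomp Require Import all_classical all_reals all_analysis.
Set Implicit Arguments. Unset Strict Implicit. Unset Printing Implicit Defensive.
Import Order.TTheory GRing.Theory Num.Theory.
Import numFieldNormedType.Exports.
Local Open Scope classical_set_scope.
Local Open Scope ring_scope.

(** Young functions (only values on [0,+oo) matter) *)
Definition young_function (R : realType) (Phi : R -> R) : Prop :=
  [/\ (forall x y t : R, 0 <= x -> 0 <= y -> 0 <= t -> t <= 1 ->
         Phi ((1 - t) * x + t * y) <= (1 - t) * Phi x + t * Phi y),
      Phi 0 = 0,
      (forall t : R, 0 < t -> 0 < Phi t) &
      Phi t @[t --> +oo] --> +oo].

Definition rderiv (R : realType) (Phi : R -> R) (t : R) : R :=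
  lim ((Phi (t + h) - Phi t) / h @[h --> 0^'+]).

Definition p_exp (R : realType) (Phi : R -> R) : \bar R :=
  ereal_sup [set (t * rderiv Phi t / Phi t)%:E | t in `]0, +oo[].

Definition r_fun (R : realType) (Phi : R -> R) (t : R) : R :=
  ln (Phi t / Phi 1) / ln t.

(** Lebesgue (outer) measure on R^d = d.-tuple R, via countable covers by
    half-open boxes prod_i [a_i, b_i) *)
Definition box (R : realType) (d : nat) (a b : d.-tuple R) : set (d.-tuple R) :=
  [set x | forall i : 'I_d, tnth a i <= tnth x i < tnth b i].

Definition box_vol (R : realType) (d : nat) (a b : d.-tuple R) : R :=
  \prod_(i < d) Num.max (tnth b i - tnth a i) 0.

Definition lebesgue_d (R : realType) (d : nat) (A : set (d.-tuple R)) : \bar R :=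
  ereal_inf [set (\sum_(k <oo) (box_vol (ab k).1 (ab k).2)%:E)%E |
    ab in [set ab : nat -> d.-tuple R * d.-tuple R |
             A `<=` \bigcup_k box (ab k).1 (ab k).2]].

Definition Lp (R : realType) (d : nat) (p : R) : set (d.-tuple R -> R) :=
  [set f : d.-tuple R -> R | measurable_fun setT f /\
     (\int[@lebesgue_d R d]_x (`|f x| `^ p)%:E < +oo)%E].

Definition modular (R : realType) (d : nat) (Phi : R -> R) (f : d.-tuple R -> R)
  : \bar R := (\int[@lebesgue_d R d]_x (Phi `|f x|)%:E)%E.

Definition luxemburg (R : realType) (d : nat) (Phi : R -> R) (f : d.-tuple R -> R)
  : \bar R :=
  ereal_inf [set lam%:E | lam in
    [set lam : R | 0 < lam /\ (modular Phi (fun x => (f x / lam)%R) <= 1)%E]].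

Definition Orlicz (R : realType) (d : nat) (Phi : R -> R) : set (d.-tuple R -> R) :=
  [set f : d.-tuple R -> R | measurable_fun setT f /\ (luxemburg Phi f < +oo)%E].

Definition fun_sum_set (T : Type) (R : realType) (A B : set (T -> R)) : set (T -> R) :=
  [set f | exists g h, A g /\ B h /\ f = (fun x => g x + h x)].

(* Main.v *)
Require Import Defs.
From HB Require Import structures.
From mathcomp Require Import all_boot all_order all_algebra.
From mathcomp Require Import all_classical all_reals all_analysis.
From mathcomp Require Import lra.
Import Order.TTheory GRing.Theory Num.Theory.
Import numFieldNormedType.Exports.
Local Open Scope classical_set_scope.
Local Open Scope ring_scope.

Section gen.
Local Open Scope ereal_scope.
Context {d} {T : measurableType d} {R : realType} (mu : set T -> \bar R).
Hypothesis mu0 : mu set0 = 0.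
Hypothesis mu_ge0 : forall A, 0 <= mu A.
Hypothesis mu_sub : forall A B, mu (A `|` B) <= mu A + mu B.
Import HBNNSimple.

Definition NN (F : T -> R) := ereal_sup [set sintegral mu h | h in
  [set h : {nnsfun T >-> R} | forall x, (h x)%:E <= (F x)%:E]].

Lemma sintE (h : {nnsfun T >-> R}) :
  sintegral mu h = \sum_(x \in range h) x%:E * mu (h @^-1` [set x]).
Proof.
rewrite (fsbig_widen (range h) setT)//= => x [_ Nfx] /=.
by rewrite preimage10// mu0 mule0.
Qed.

Lemma sint_term_ge0 (h : {nnsfun T >-> R}) x : 0 <= x%:E * mu (h @^-1` [set x]).
Proof.
case: (ltP x 0%R) => [x0|x0]; last by rewrite mule_ge0.
by rewrite preimage_nnfun0// mu0 mule0.
Qed.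

Lemma sint_ge0 (h : {nnsfun T >-> R}) : 0 <= sintegral mu h.
Proof. by rewrite sintE fsume_ge0// => r _; exact: sint_term_ge0. Qed.

Lemma sint0 : sintegral mu (cst 0%R) = 0.
Proof.
rewrite /sintegral fsbig1// => r _; rewrite preimage_cst.
by case: ifPn => [/[!inE] <-|]; rewrite ?mul0e// mu0 mule0.
Qed.

Lemma NN0 : NN (cst 0%R) = 0.
Proof.
rewrite /NN /=; apply/eqP; rewrite eq_le; apply/andP; split; last first.
  by apply/ereal_sup_ubound; exists nnsfun0; [|exact: sint0].
apply/ge_ereal_sup => /= x [f /= f0 <-]; have {}f0 : forall x, f x = 0%R.
  by move=> y; apply/eqP; rewrite eq_le -2!lee_fin f0 //= lee_fin//.
by rewrite (eq_sintegral (@nnsfun0 _ T R)) ?sint0.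
Qed.

Lemma intNN F : (forall x, (0 <= F x)%R) -> \int[mu]_x (F x)%:E = NN F.
Proof.
move=> F0; rewrite /integral patch_setT.
have -> : (fun x => (F x)%:E) ^\+ = (fun x => (F x)%:E).
  by apply/funext => x; rewrite funeposE /= max_l // lee_fin.
have -> : (fun x => (F x)%:E) ^\- = (fun x => (cst 0%R x)%:E).
  by apply/funext => x; rewrite funenegE /= max_r // lee_fin oppr_le0.
by rewrite -[X in _ - X]/(NN (cst 0%R)) NN0 sube0.
Qed.

Lemma sint_scale (r : R) (h : {nnsfun T >-> R}) : (0 < r)%R ->
  sintegral mu (cst r \* h)%R = r%:E * sintegral mu h.
Proof.
move=> r0; rewrite /sintegral ge0_mule_fsumr; last by move=> x; exact: sint_term_ge0.
rewrite (reindex_fsbigT ( *%R r))/=; last first.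
  by exists ( *%R r^-1) => y /=; rewrite ?mulKf ?mulVKf ?gt_eqF.
apply: eq_fsbigr => x; rewrite preimage_cstM ?gt_eqF//.
by rewrite [(_ / r)%R]mulrC mulKf ?gt_eqF// EFinM muleA.
Qed.

Lemma NN_mono F G : (forall x, (F x <= G x)%R) -> NN F <= NN G.
Proof.
move=> FG; apply: ge_ereal_sup => _ [h hF <-]; apply: ereal_sup_ubound.
exists h => //= x; apply: (le_trans (hF x)); rewrite lee_fin; exact: FG.
Qed.


Lemma NN_scale (r : R) F : (0 < r)%R -> NN (fun x => r * F x)%R <= r%:E * NN F.
Proof.
move=> r0; apply: ge_ereal_sup => _ [h hF <-].
have ri0 : (0 <= r^-1)%R by rewrite invr_ge0 ltW.
pose h' := scale_nnsfun h ri0.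
have -> : sintegral mu h = sintegral mu (cst r \* h')%R.
  by apply: eq_sintegral => x /=; rewrite mulrA mulfV ?gt_eqF// mul1r.
rewrite sint_scale//; apply: lee_wpmul2l; first by rewrite lee_fin ltW.
apply: ereal_sup_ubound; exists h' => //= x.
rewrite lee_fin -(ler_pM2l r0) mulrA mulfV ?gt_eqF// mul1r -lee_fin; exact: hF.
Qed.

Lemma sintW (g : {nnsfun T >-> R}) S : range g `<=` S ->
  sintegral mu g = \sum_(x \in S) x%:E * mu (g @^-1` [set x]).
Proof.
move=> gS; rewrite /sintegral; apply/esym/fsbig_widen => // x [_ nS] /=.
rewrite preimage10 ?mu0 ?mule0// => gx; exact: nS (gS _ gx).
Qed.

Lemma preimage_proj (h : {nnsfun T >-> R}) A (mA : measurable A) x : x <> 0%R ->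
  (proj_nnsfun h mA) @^-1` [set x] = h @^-1` [set x] `&` A.
Proof.
move=> x0; apply/seteqP; split => y /=; rewrite measurable_realfun.mindicE;
  case: (boolP (y \in A)) => yA /=; rewrite ?mulr1 ?mulr0.
- by move=> ->; split => //; rewrite -inE.
- by move=> /esym.
- by case.
- by case=> _; rewrite -inE (negbTE yA).
Qed.

Lemma sint_split (h : {nnsfun T >-> R}) A (mA : measurable A) (mAc : measurable (~` A)) :
  sintegral mu h <= sintegral mu (proj_nnsfun h mA) + sintegral mu (proj_nnsfun h mAc).
Proof.
pose S := range h `|` [set 0%R].
have Sfin : finite_set S by rewrite finite_setU; split => //; exact: fimfunP.
have rp B (mB : measurable B) : range (proj_nnsfun h mB) `<=` S.
  move=> _ [y _ <-] /=; rewrite measurable_realfun.mindicE; case: (y \in B); rewrite ?mulr1 ?mulr0.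
    by left; exists y.
  by right.
rewrite (@sintW h S); last by move=> y hy; left.
rewrite (sintW _ _ (rp _ mA)) (sintW _ _ (rp _ mAc)) -fsbig_split//.
apply: lee_fsum => // x _ /=.
have [->|x0] := eqVneq x 0%R; first by rewrite !mul0e adde0.
rewrite !preimage_proj//; try exact/eqP.
case: (ltP x 0%R) => [xlt0|xge0].
  by rewrite preimage_nnfun0// !set0I mu0 !mule0 adde0.
rewrite -ge0_muleDr//; apply: lee_wpmul2l; first by rewrite lee_fin.
apply: le_trans (mu_sub _ _); rewrite -setIUr setUv setIT //.
Qed.

Lemma NN_split F G1 G2 A (mA : measurable A) (mAc : measurable (~` A)) :
  (forall x, A x -> (F x <= G1 x)%R) -> (forall x, ~ A x -> (F x <= G2 x)%R) ->
  (forall x, (0 <= G1 x)%R) -> (forall x, (0 <= G2 x)%R) ->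
  NN F <= NN G1 + NN G2.
Proof.
move=> h1 h2 g1 g2; apply: ge_ereal_sup => _ [h hF <-].
have := sint_split h _ mA mAc => /le_trans; apply; apply: leeD.
- apply: ereal_sup_ubound; exists (proj_nnsfun h mA) => //= x.
  rewrite measurable_realfun.mindicE; case: (boolP (x \in A)) => xA; rewrite ?mulr1 ?mulr0.
    by apply: le_trans (hF x) _; rewrite lee_fin h1 // -inE.
  by rewrite lee_fin.
- apply: ereal_sup_ubound; exists (proj_nnsfun h mAc) => //= x.
  rewrite measurable_realfun.mindicE; case: (boolP (x \in ~` A)) => xA; rewrite ?mulr1 ?mulr0.
    by apply: le_trans (hF x) _; rewrite lee_fin h2 // -[~ _]/((~` A) x) -inE.
  by rewrite lee_fin.
Qed.

End gen.

Lemma NN_ge0 d (T : measurableType d) (R : realType) (mu : set T -> \bar R)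
  (mu0 : mu set0 = 0%E) (mu_ge0 : forall A, (0 <= mu A)%E) (F : T -> R) :
  (forall x, 0 <= F x) -> (0 <= NN mu F)%E.
Proof.
move=> F0; apply: ereal_sup_ubound; exists nnsfun0.
  by move=> x /=; rewrite lee_fin F0.
by rewrite (eq_sintegral (cst 0%R)) // sint0.
Qed.

Section leb.
Local Open Scope ereal_scope.
Context (R : realType) (d : nat).

Lemma box_vol_ge0 (a b : d.-tuple R) : (0 <= box_vol a b)%R.
Proof. by apply: prodr_ge0 => i _; rewrite le_max lexx orbT. Qed.

Lemma lebd_ge0 A : 0 <= @lebesgue_d R d A.
Proof.
apply: le_ereal_inf_tmp => _ [ab _ <-].
by apply: nneseries_ge0 => k _ _; rewrite lee_fin box_vol_ge0.
Qed.

Lemma lebd0 : (1 <= d)%N -> @lebesgue_d R d set0 = 0.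
Proof.
move=> d1; apply/eqP; rewrite eq_le lebd_ge0 andbT.
pose t : d.-tuple R := [tuple 0%R | i < d].
apply: ge_ereal_inf; exists 0 => //.
exists (fun=> (t, t)) => //; apply: eseries0 => k _ _ /=.
rewrite /box_vol; case: d d1 t => // d' _ t.
by rewrite big_ord_recl subrr maxxx mul0r.
Qed.

Lemma lebd_sub A B : @lebesgue_d R d (A `|` B) <= lebesgue_d A + lebesgue_d B.
Proof.
have hA := lebd_ge0 A; have hB := lebd_ge0 B.
case EA: (lebesgue_d A) hA => [a| |] // _; case EB: (lebesgue_d B) hB => [b| |] // _;
  rewrite ?addey ?addye ?leey //.
apply/lee_addgt0Pr => e e0.
have e20 : (0 < e / 2)%R by rewrite divr_gt0.
have [_ [ab1 cov1 <-] lt1] : exists2 y, [set (\sum_(k <oo) (box_vol (ab k).1 (ab k).2)%:E) |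
    ab in [set ab : nat -> d.-tuple R * d.-tuple R |
             A `<=` \bigcup_k box (ab k).1 (ab k).2]] y & y < (a + e / 2)%:E.
  by apply: ereal_inf_lt; rewrite -/(lebesgue_d A) EA lte_fin ltrDl.
have [_ [ab2 cov2 <-] lt2] : exists2 y, [set (\sum_(k <oo) (box_vol (ab k).1 (ab k).2)%:E) |
    ab in [set ab : nat -> d.-tuple R * d.-tuple R |
             B `<=` \bigcup_k box (ab k).1 (ab k).2]] y & y < (b + e / 2)%:E.
  by apply: ereal_inf_lt; rewrite -/(lebesgue_d B) EB lte_fin ltrDl.
pose ab k := if odd k then ab2 k./2 else ab1 k./2.
pose u k := (box_vol (ab k).1 (ab k).2)%:E.
pose u1 k := (box_vol (ab1 k).1 (ab1 k).2)%:E.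
pose u2 k := (box_vol (ab2 k).1 (ab2 k).2)%:E.
have u0 k : 0 <= u k by rewrite lee_fin box_vol_ge0.
have u10 k : 0 <= u1 k by rewrite lee_fin box_vol_ge0.
have u20 k : 0 <= u2 k by rewrite lee_fin box_vol_ge0.
apply: (@le_trans _ _ (\sum_(k <oo) u k)).
  apply: ereal_inf_lbound; exists ab => //= x [/cov1 [k _ xk]|/cov2 [k _ xk]].
    by exists k.*2 => //; rewrite /ab odd_double doubleK.
  by exists k.*2.+1 => //; rewrite /ab /= odd_double /= uphalf_double.
have part n : (\sum_(0 <= k < n.*2) u k = \sum_(0 <= k < n) u1 k + \sum_(0 <= k < n) u2 k)%R.
  elim: n => [|n IH]; first by rewrite /= !big_geq // addr0.
  rewrite doubleS !big_nat_recr //= IH.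
  rewrite /u /ab /= odd_double doubleK /= uphalf_double -/(u1 n) -/(u2 n).
  by rewrite -!addeA; congr (_ + _); rewrite addeCA.
apply: (@le_trans _ _ ((a + e / 2)%:E + (b + e / 2)%:E)); last first.
  by rewrite -EFinD lee_fin addrACA -splitr addrC.
apply: lime_le; first exact: is_cvg_nneseries.
apply: nearW => n.
apply: (@le_trans _ _ (\sum_(0 <= k < n.*2) u k)%R).
  rewrite -addnn [X in _ <= X](@big_cat_nat _ _ _ n) //= ?leq_addr//.
  by apply: leeDl; apply: sume_ge0.
rewrite part; apply: leeD.
  by apply: le_trans (ltW lt1); exact: nneseries_lim_ge.
by apply: le_trans (ltW lt2); exact: nneseries_lim_ge.
Qed.

End leb.

Lemma near0r (R : realType) (P : R -> Prop) : (\forall t \near 0^'+, P t) ->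
  exists2 e : R, 0 < e & forall t, 0 < t -> t < e -> P t.
Proof.
move=> /nbhs_ballP [e /= e0 He]; exists e => // t t0 te; apply: He => //;
  by rewrite ?gt_eqF // /ball /= sub0r normrN gtr0_norm.
Qed.

Lemma nearoo (R : realType) (P : R -> Prop) : (\forall t \near +oo, P t) ->
  exists M : R, forall t, M < t -> P t.
Proof. by move=> [M [_ HM]]; exists M. Qed.

Arguments nearoo {R P}.
Arguments near0r {R P}.

Section young.
Context (R : realType) (Phi : R -> R) (Y : young_function Phi).

Lemma Y0 : Phi 0 = 0. Proof. by case: Y. Qed.
Lemma Ypos t : 0 < t -> 0 < Phi t. Proof. by case: Y => _ _ h _; exact: h. Qed.
Lemma Yge0 t : 0 <= t -> 0 <= Phi t.
Proof. by rewrite le_eqVlt => /orP[/eqP<-|/Ypos/ltW//]; rewrite Y0. Qed.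

Lemma Ymono x y : 0 <= x -> x <= y -> Phi x <= Phi y.
Proof.
move=> x0 xy; have [y0|y0] := eqVneq y 0.
  by subst y; have -> : x = 0 by apply/le_anti; rewrite xy x0.
have ygt0 : 0 < y by rewrite lt_neqAle eq_sym y0 (le_trans x0 xy).
case: Y => conv _ _ _.
have t0 : 0 <= x / y by rewrite divr_ge0 // ltW.
have t1 : x / y <= 1 by rewrite ler_pdivrMr // mul1r.
have := conv 0 y (x / y) (lexx _) (ltW ygt0) t0 t1.
rewrite mulr0 add0r divfK // Y0 mulr0 add0r => /le_trans; apply.
by rewrite ler_piMl // Yge0 // ltW.
Qed.

Lemma phi_exp t : 0 < t -> t != 1 -> Phi t = Phi 1 * expR (r_fun Phi t * ln t).
Proof.
move=> t0 t1; have lnt : ln t != 0.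
  have [tl1|tg1|te] := ltgtP t 1.
  - by rewrite lt_eqF // ln_lt0 // t0 tl1.
  - by rewrite gt_eqF // ln_gt0.
  - by move: t1; rewrite te eqxx.
rewrite /r_fun divfK // lnK; first by rewrite mulrC divfK // gt_eqF // Ypos.
by rewrite posrE divr_gt0 // Ypos.
Qed.

Lemma powR_exp (t s : R) : 0 < t -> t `^ s = expR (s * ln t).
Proof. by move=> t0; rewrite /powR gt_eqF. Qed.

Lemma phi_le_pow t s : 0 < t -> t != 1 ->
  (Phi t <= Phi 1 * t `^ s) = (r_fun Phi t * ln t <= s * ln t).
Proof.
by move=> t0 t1; rewrite {1}phi_exp // powR_exp // ler_pM2l ?Ypos // ler_expR.
Qed.

Lemma phi_ge_pow t s : 0 < t -> t != 1 ->
  (Phi 1 * t `^ s <= Phi t) = (s * ln t <= r_fun Phi t * ln t).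
Proof.
by move=> t0 t1; rewrite [X in _ <= X]phi_exp // powR_exp // ler_pM2l ?Ypos // ler_expR.
Qed.

Section bounds.
Variables (r0 rinf : R).
Hypothesis H0 : r_fun Phi t @[t --> 0^'+] --> r0.
Hypothesis Hinf : r_fun Phi t @[t --> +oo] --> rinf.

Lemma E1 p : rinf < p -> exists M, 1 <= M /\ forall t, M <= t -> Phi t <= Phi 1 * t `^ p.
Proof.
move=> hp; have [M HM] := nearoo (cvgr_lt _ Hinf _ hp).
exists (Num.max M 1 + 1); split; first by rewrite lerDr (le_trans ler01) // le_max lexx orbT.
move=> t tM; have t1 : 1 < t by apply: lt_le_trans tM; rewrite ltr_pwDr // le_max lexx orbT.
have t0 : 0 < t by apply: lt_trans t1.
rewrite phi_le_pow // ?gt_eqF // ler_pM2r ?ln_gt0 //; apply/ltW/HM.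
by apply: lt_le_trans tM; rewrite ltr_pwDr // le_max lexx.
Qed.

Lemma E2 q : q < rinf -> exists M, 1 <= M /\ forall t, M <= t -> Phi 1 * t `^ q <= Phi t.
Proof.
move=> hq; have [M HM] := nearoo (cvgr_gt _ Hinf _ hq).
exists (Num.max M 1 + 1); split; first by rewrite lerDr (le_trans ler01) // le_max lexx orbT.
move=> t tM; have t1 : 1 < t by apply: lt_le_trans tM; rewrite ltr_pwDr // le_max lexx orbT.
have t0 : 0 < t by apply: lt_trans t1.
rewrite phi_ge_pow // ?gt_eqF // ler_pM2r ?ln_gt0 //; apply/ltW/HM.
by apply: lt_le_trans tM; rewrite ltr_pwDr // le_max lexx.
Qed.

Lemma E3 q : q < r0 -> exists2 e, 0 < e <= 1 & forall t, 0 < t -> t <= e -> Phi t <= Phi 1 * t `^ q.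
Proof.
move=> hq; have [e e0 He] := near0r (cvgr_gt _ H0 _ hq).
have h12 : (1/2 : R) < 1 by rewrite ltr_pdivrMr // mul1r ltr1n.
have he : e/2 < e by rewrite ltr_pdivrMr // ltr_pMr // ltr1n.
exists (Num.min (e / 2) (1 / 2)).
  by rewrite lt_min !divr_gt0 //= ge_min (ltW h12) orbT.
move=> t t0 te; have t1 : t < 1.
  by apply: le_lt_trans te _; rewrite gt_min h12 orbT.
rewrite phi_le_pow // ?lt_eqF // ler_nM2r ?ln_lt0 ?t0 //; apply/ltW/He => //.
by apply: le_lt_trans te _; rewrite gt_min he.
Qed.

Lemma E4 p : r0 < p -> exists2 e, 0 < e <= 1 & forall t, 0 < t -> t <= e -> Phi 1 * t `^ p <= Phi t.
Proof.
move=> hp; have [e e0 He] := near0r (cvgr_lt _ H0 _ hp).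
have h12 : (1/2 : R) < 1 by rewrite ltr_pdivrMr // mul1r ltr1n.
have he : e/2 < e by rewrite ltr_pdivrMr // ltr_pMr // ltr1n.
exists (Num.min (e / 2) (1 / 2)).
  by rewrite lt_min !divr_gt0 //= ge_min (ltW h12) orbT.
move=> t t0 te; have t1 : t < 1.
  by apply: le_lt_trans te _; rewrite gt_min h12 orbT.
rewrite phi_ge_pow // ?lt_eqF // ler_nM2r ?ln_lt0 ?t0 //; apply/ltW/He => //.
by apply: le_lt_trans te _; rewrite gt_min he.
Qed.

Lemma P1 p q : rinf < p -> q < r0 -> 0 <= p -> 0 <= q -> exists2 K, 0 < K &
  forall t, 0 <= t -> (1 <= t -> Phi t <= K * t `^ p) /\ (t <= 1 -> Phi t <= K * t `^ q).
Proof.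
move=> hp hq p0 q0.
have [M [M1 HM]] := E1 _ hp; have [e /andP[e0 e1] He] := E3 _ hq.
have P1g : 0 < Phi 1 := Ypos _ ltr01.
have PM : 0 <= Phi M by rewrite Yge0 // (le_trans ler01).
have eq0 : 0 < e `^ q by rewrite powR_gt0.
have Pe : 0 <= Phi 1 / e `^ q by rewrite divr_ge0 // ltW.
pose K := Phi 1 + Phi M + Phi 1 / e `^ q.
have K1 : Phi 1 <= K by rewrite /K; lra.
have KM : Phi M <= K by rewrite /K; lra.
have Ke : Phi 1 / e `^ q <= K by rewrite /K; lra.
have K0 : 0 < K by apply: lt_le_trans K1.
exists K => // t t0; split => ht.
  have tp1 : 1 <= t `^ p by rewrite -(powRr0 t) ler_powR.
  case: (leP M t) => tM.
    by apply: le_trans (HM _ tM) _; rewrite ler_wpM2r // powR_ge0.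
  apply: le_trans (Ymono _ _ _ (ltW tM)) _; first exact: t0.
  by apply: (le_trans KM); rewrite -{1}(mulr1 K) ler_wpM2l // ltW.
have [->|tn0] := eqVneq t 0; first by rewrite Y0 mulr_ge0 // ?powR_ge0 // ltW.
have tg0 : 0 < t by rewrite lt_neqAle eq_sym tn0.
case: (leP t e) => te.
  by apply: le_trans (He _ tg0 te) _; rewrite ler_wpM2r // powR_ge0.
apply: le_trans (Ymono _ _ t0 ht) _.
have -> : Phi 1 = Phi 1 / e `^ q * e `^ q by rewrite divfK // gt_eqF.
apply: ler_pM => //; first exact: powR_ge0.
by apply: ge0_ler_powR; rewrite ?nnegrE ?(ltW e0) ?(ltW te) //.
Qed.

Lemma P2 p q : r0 < p -> q < rinf -> 0 < p -> 0 <= q -> exists2 c, 0 < c &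
  forall t, 0 <= t -> (t <= 1 -> t `^ p <= c * Phi t) /\ (1 <= t -> t `^ q <= c * Phi t).
Proof.
move=> hp hq p0 q0.
have [M [M1 HM]] := E2 _ hq; have [e /andP[e0 e1] He] := E4 _ hp.
have P1g : 0 < Phi 1 := Ypos _ ltr01.
have Peg : 0 < Phi e := Ypos _ e0.
have a1 : 0 <= 1 / Phi 1 by rewrite divr_ge0 // ltW.
have a2 : 0 <= 1 / Phi e by rewrite divr_ge0 // ltW.
have a3 : 0 <= M `^ q / Phi 1 by rewrite divr_ge0 ?powR_ge0 // ltW.
pose c := 1 / Phi 1 + 1 / Phi e + M `^ q / Phi 1.
have c1 : 1 / Phi 1 <= c by rewrite /c; lra.
have c2 : 1 / Phi e <= c by rewrite /c; lra.
have c3 : M `^ q / Phi 1 <= c by rewrite /c; lra.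
have c0 : 0 < c by apply: lt_le_trans c1; rewrite divr_gt0.
exists c => // t t0; have Pt0 := Yge0 _ t0; split => ht.
  have [->|tn0] := eqVneq t 0; first by rewrite powR0 ?gt_eqF // Y0 mulr0.
  have tg0 : 0 < t by rewrite lt_neqAle eq_sym tn0.
  case: (leP t e) => te.
    apply: (@le_trans _ _ (1 / Phi 1 * Phi t)); last by rewrite ler_wpM2r.
    by rewrite mul1r mulrC ler_pdivlMr // mulrC He.
  apply: (@le_trans _ _ (1 / Phi e * Phi t)); last by rewrite ler_wpM2r.
  apply: (@le_trans _ _ 1).
    have -> : (1:R) = 1 `^ p by rewrite powR1.
    by apply: ge0_ler_powR; rewrite ?nnegrE ?ler01 ?(ltW p0) ?(ltW tg0) //.
  by rewrite mul1r mulrC ler_pdivlMr // mul1r Ymono // ltW.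
case: (leP M t) => tM.
  apply: (@le_trans _ _ (1 / Phi 1 * Phi t)); last by rewrite ler_wpM2r.
  by rewrite mul1r mulrC ler_pdivlMr // mulrC HM.
apply: (@le_trans _ _ (M `^ q / Phi 1 * Phi t)); last by rewrite ler_wpM2r.
apply: (@le_trans _ _ (M `^ q)).
  have tg0 : 0 < t by apply: lt_le_trans ht.
  by apply: ge0_ler_powR; rewrite ?nnegrE ?(ltW tM) ?(ltW tg0) // (le_trans ler01).
rewrite mulrAC ler_pdivlMr // ler_wpM2l ?powR_ge0 //.
by apply: Ymono => //; exact: ler01.
Qed.

End bounds.

End young.


Lemma fin_ge0 (R : realType) (x : \bar R) : (0 <= x)%E -> (x < +oo)%E ->
  exists2 r : R, x = r%:E & 0 <= r.
Proof. by case: x => // r r0 _; exists r => //; rewrite -lee_fin. Qed.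

Lemma powRV (R : realType) (a r : R) : 0 <= a -> (a^-1) `^ r = (a `^ r)^-1.
Proof. by move=> a0; rewrite -powR_inv1 // -powRrM mulN1r powRN. Qed.

Theorem mainTheorem16 (R : realType) (d : nat) (Phi : R -> R) (r0 rinf : R) :
  (1 <= d)%N ->
  young_function Phi ->
  (p_exp Phi < +oo)%E ->
  r_fun Phi t @[t --> 0^'+] --> r0 ->
  r_fun Phi t @[t --> +oo] --> rinf ->
  1 < r0 -> 1 < rinf ->
  forall p q : R, Num.max r0 rinf < p -> 1 < q -> q < Num.min r0 rinf ->
    @Lp R d p `&` @Lp R d q `<=` @Orlicz R d Phi /\
    @Orlicz R d Phi `<=` fun_sum_set (@Lp R d p) (@Lp R d q).
Proof.
move=> d1 Y _ H0 Hinf _ _ p q hp q1 hq.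
have [r0p rinfp] : r0 < p /\ rinf < p by move: hp; rewrite gt_max => /andP[].
have [qr0 qrinf] : q < r0 /\ q < rinf by move: hq; rewrite lt_min => /andP[].
have q0 : 0 < q by apply: lt_trans q1.
have p0 : 0 < p by apply: lt_trans q0 (lt_trans qrinf rinfp).
have mu0 : @lebesgue_d R d set0 = 0%E := lebd0 R d d1.
have mu_ge0 : forall A, (0 <= @lebesgue_d R d A)%E := @lebd_ge0 R d.
have mu_sub := @lebd_sub R d.
split.
- move=> f [[mf Ifp] [_ Ifq]].
  rewrite (intNN _ mu0) in Ifp; last by move=> x; exact: powR_ge0.
  rewrite (intNN _ mu0) in Ifq; last by move=> x; exact: powR_ge0.
  have [ip Ipe ip0] := @fin_ge0 R _ (@NN_ge0 _ _ _ _ mu0 mu_ge0 _ (fun x => powR_ge0 (`|f x|) p)) Ifp.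
  have [iq Iqe iq0] := @fin_ge0 R _ (@NN_ge0 _ _ _ _ mu0 mu_ge0 _ (fun x => powR_ge0 (`|f x|) q)) Ifq.
  have [K K0 HK] := @P1 R Phi Y _ _ H0 Hinf _ _ rinfp qr0 (ltW p0) (ltW q0).
  pose lam := 1 + K * (ip + iq).
  have lam1 : 1 <= lam by rewrite /lam lerDl mulr_ge0 // ?addr_ge0 // ltW.
  have lam0 : 0 < lam by apply: lt_le_trans lam1.
  split => //.
  apply: (@le_lt_trans _ _ lam%:E); last exact: ltry.
  apply: ge_ereal_inf; exists lam%:E => //; exists lam => //; split => //.
  rewrite /modular (intNN _ mu0); last by move=> x; apply: Yge0.
  pose A := [set x : d.-tuple R | lam <= `|f x|].
  have mA : measurable A.
    rewrite -[A]setTI; apply: measurable_fun_le => //.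
    by apply: measurableT_comp; [exact: measurable_realfun.normr_measurable | exact: mf].
  have mAc : measurable (~` A) by exact: measurableC.
  have lq0 : 0 < lam `^ q by rewrite powR_gt0.
  have lqp : lam `^ q <= lam `^ p.
    by apply: ler_powR => //; apply: ltW (lt_trans qr0 r0p).
  pose c1 := K / lam `^ q.
  have c10 : 0 < c1 by rewrite divr_gt0.
  have tE x : `|f x / lam| = `|f x| / lam by rewrite normrM normfV (gtr0_norm lam0).
  have tpE s x : (`|f x| / lam) `^ s = `|f x| `^ s / lam `^ s.
    by rewrite powRM // ?invr_ge0 ?(ltW lam0) // powRV // ltW.
  apply: le_trans (@NN_split _ _ _ _ mu0 mu_ge0 mu_sub _
     (fun x => c1 * `|f x| `^ p) (fun x => c1 * `|f x| `^ q) _ mA mAc _ _ _ _) _.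
  - move=> x /= xA; rewrite tE.
    have t1 : 1 <= `|f x| / lam by rewrite ler_pdivlMr // mul1r.
    apply: le_trans ((HK _ (le_trans ler01 t1)).1 t1) _.
    rewrite tpE /c1 mulrCA [X in _ <= X]mulrC mulrA -mulrA.
    rewrite ler_wpM2l ?powR_ge0 //.
    by rewrite ler_pM2l // lef_pV2 ?posrE ?powR_gt0.
  - move=> x /= xA; rewrite tE.
    have t1 : `|f x| / lam <= 1.
      by rewrite ler_pdivrMr // mul1r; apply/ltW; rewrite ltNge; apply/negP.
    apply: le_trans ((HK _ (divr_ge0 (normr_ge0 _) (ltW lam0))).2 t1) _.
    by rewrite tpE /c1 mulrCA [X in _ <= X]mulrC mulrA.
  - by move=> x; rewrite mulr_ge0 ?powR_ge0 // ltW.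
  - by move=> x; rewrite mulr_ge0 ?powR_ge0 // ltW.
  apply: le_trans (leeD (@NN_scale _ _ _ _ mu0 mu_ge0 _ _ c10)
                        (@NN_scale _ _ _ _ mu0 mu_ge0 _ _ c10)) _.
  rewrite Ipe Iqe -!EFinM -EFinD lee_fin -mulrDr /c1 mulrAC ler_pdivrMr // mul1r.
  apply: le_trans (le1r_powR lam1 (ltW q1)); rewrite /lam; lra.
- move=> f [mf]; rewrite /luxemburg => /ereal_inf_lt [_ [lam [lam0 hmod] <-] _].
  rewrite /modular (intNN _ mu0) in hmod; last by move=> x; apply: Yge0.
  have [c c0 Hc] := @P2 R Phi Y _ _ H0 Hinf _ _ r0p qrinf p0 (ltW q0).
  pose B := [set x : d.-tuple R | `|f x| <= lam].
  have mB : measurable B.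
    rewrite -[B]setTI; apply: measurable_fun_le => //.
    by apply: measurableT_comp; [exact: measurable_realfun.normr_measurable | exact: mf].
  have mBc : measurable (~` B) by exact: measurableC.
  have tE x : `|f x / lam| = `|f x| / lam by rewrite normrM normfV (gtr0_norm lam0).
  have fE x : `|f x| = lam * (`|f x| / lam) by rewrite mulrC divfK // gt_eqF.
  have mainb s (D : set (d.-tuple R)) (mD : measurable D) : 0 < s ->
     (forall x, D x -> `|f x| `^ s <= lam `^ s * (c * Phi `|f x / lam|)) ->
     Lp s (fun x => f x * \1_D x).
    move=> s0 Hb; split.
      by apply: measurable_realfun.measurable_funM => //; exact: measurable_realfun.measurable_indic.
    rewrite (intNN _ mu0); last by move=> x; exact: powR_ge0.
    have k0 : 0 < lam `^ s * c by rewrite mulr_gt0 // powR_gt0.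
    apply: (@le_lt_trans _ _ ((lam `^ s * c)%:E * 1)%E); last by rewrite mule1 ltry.
    apply: le_trans (@NN_mono _ _ _ _ _ (fun x => lam `^ s * c * Phi `|f x / lam|) _) _.
      move=> x; rewrite indicE; case: (boolP (x \in D)) => xD.
        by rewrite mulr1 -mulrA Hb // -inE.
      rewrite mulr0 normr0 powR0 ?gt_eqF //; apply: mulr_ge0; first exact: ltW.
      exact: (@Yge0 R Phi Y _ (normr_ge0 _)).
    apply: le_trans (@NN_scale _ _ _ _ mu0 mu_ge0 _ _ k0) _.
    by rewrite lee_wpmul2l // lee_fin ltW.
  exists (fun x => f x * \1_B x), (fun x => f x * \1_(~` B) x); split; [|split].
  + apply: mainb => // x /= xB.
    have t1 : `|f x| / lam <= 1 by rewrite ler_pdivrMr // mul1r.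
    have t0 : 0 <= `|f x| / lam by exact: divr_ge0 (normr_ge0 _) (ltW lam0).
    rewrite tE {1}fE powRM //; last exact: ltW.
    by rewrite ler_wpM2l ?powR_ge0 //; exact: (Hc _ t0).1.
  + apply: mainb => // x /= xB.
    have t1 : 1 <= `|f x| / lam.
      by rewrite ler_pdivlMr // mul1r; apply/ltW; rewrite ltNge; apply/negP.
    have t0 : 0 <= `|f x| / lam by exact: divr_ge0 (normr_ge0 _) (ltW lam0).
    rewrite tE {1}fE powRM //; last exact: ltW.
    by rewrite ler_wpM2l ?powR_ge0 //; exact: (Hc _ t0).2.
  + apply/funext => x; rewrite !indicE in_setC.
    by case: (x \in B); rewrite ?mulr1 ?mulr0 ?addr0 ?add0r.
Qed.
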